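(* For every $a \in \mathbb{N}$ and every integer $b \ge 2$, $R_\mathrm{ord}(S_a^\mathrm{sc}, C_b^\mathrm{mon}) = 1 + (a-1)(b-1)$.
   Context: All graphs are finite, simple and undirected, and a graph of order $n$ has vertex set $\{0,1,\ldots,n-1\}$; $K_n$ is the complete graph on $\{0,\ldots,n-1\}$. A $2$-edge-coloring of $K_n$ assigns each edge a color in $\{1,2\}$. For a graph $H$ and such a coloring, an embedding of $H$ in color $j$ is an injective map $\varphi\colon V(H)\to V(K_n)$ such that for every edge $uv$ of $H$ the edge $\{\varphi(u),\varphi(v)\}$ has color $j$; it is increasing if $\varphi(0)<\cdots<\varphi(|H|-1)$. The ordered Ramsey number $R_\mathrm{ord}(H_1,H_2)$ is the smallest $n$ such that every $2$-edge-coloring of $K_n$ admits an increasing embedding of $H_1$ in color $1$ or an increasing embedding of $H_2$ in color $2$. The start-central star $S_n^\mathrm{sc}$ is the graph of order $n$ whose edges are exactly $\{0,v\}$ for $1\le v\le n-1$. For $n\ge3$ the monotone cycle $C_n^\mathrm{mon}$ has edges $\{i,i+1\}$ ($0\le i\le n-2$) and $\{0,n-1\}$; by convention $C_2^\mathrm{mon}=K_2$. *)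

(* Defs.v *)
From mathcomp Require Import all_boot.
Set Implicit Arguments. Unset Strict Implicit. Unset Printing Implicit Defensive.

(* A (finite simple) graph of order [gorder] on vertex set {0,..,gorder-1};
   [gedge u v] is the (symmetric) edge relation, only meaningful on vertices
   < gorder. *)
Record graph := Graph { gorder : nat; gedge : rel nat }.

(* A 2-edge-coloring of K_n: for x < y the edge {x,y} gets color [c x y];
   colors are booleans: [true] = color 1, [false] = color 2.  Values of
   [c x y] with x >= y are irrelevant. *)
Definition coloring (n : nat) := 'I_n -> 'I_n -> bool.

Definition edge_color n (c : coloring n) (x y : 'I_n) : bool :=
  if (x < y)%N then c x y else c y x.

Definition incr_embedding (H : graph) n (c : coloring n) (j : bool)
    (phi : 'I_(gorder H) -> 'I_n) : Prop :=
  (forall u v : 'I_(gorder H), (u < v)%N -> (phi u < phi v)%N) /\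
  (forall u v : 'I_(gorder H), gedge H u v -> edge_color c (phi u) (phi v) = j).

Definition ord_ramsey_prop (H1 H2 : graph) (n : nat) : Prop :=
  forall c : coloring n,
    (exists phi, @incr_embedding H1 n c true phi) \/
    (exists phi, @incr_embedding H2 n c false phi).

Definition is_ord_ramsey_number (H1 H2 : graph) (N : nat) : Prop :=
  ord_ramsey_prop H1 H2 N /\ (forall n, (n < N)%N -> ~ ord_ramsey_prop H1 H2 n).

Definition star_sc (n : nat) : graph :=
  Graph n (fun u v => ((u == 0) && (0 < v < n)) || ((v == 0) && (0 < u < n))).

(* monotone cycle C_n^mon (n >= 3): edges {i,i+1} (i <= n-2) and {0,n-1};
   for n = 2 this gives exactly the single edge {0,1}, i.e. K_2. *)
Definition cycle_mon (n : nat) : graph :=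
  Graph n (fun u v => [&& (u < n), (v < n), (u != v) &
     [|| v == u.+1, u == v.+1, (u == 0) && (v == n.-1) | (v == 0) && (u == n.-1)]]).

(* Main.v *)
Require Import Defs.
From mathcomp Require Import all_boot.
From mathcomp Require Import zify.
Set Implicit Arguments. Unset Strict Implicit. Unset Printing Implicit Defensive.

Section Upper.
Variables (a N : nat) (c : coloring N.+1).
Definition Rs (x : 'I_N.+1) := [set y : 'I_N.+1 | (x < y) && edge_color c x y].

Lemma ec_sym (x y : 'I_N.+1) : x != y -> edge_color c x y = edge_color c y x.
Proof.
move=> ne; rewrite /edge_color; case: ltngtP => // e.
by case/eqP: ne; apply: val_inj.
Qed.

Lemma pick_incr k (S : {set 'I_N.+1}) : k <= #|S| ->
  exists g : nat -> 'I_N.+1, (forall i j, i < j < k -> g i < g j) /\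
    (forall i, i < k -> g i \in S).
Proof.
elim: k S => [|k IH] S hk.
  by exists (fun _ => ord0); split => // i j; lia.
have [x0 x0S] : exists x, x \in S.
  by apply/set0Pn; rewrite -card_gt0; lia.
case: (@arg_minnP _ x0 (fun x => x \in S) val x0S) => m mS mmin.
have /IH [g [ginc gS]] : k <= #|S :\ m| by rewrite (cardsD1 m S) mS in hk; lia.
exists (fun i => if i is i'.+1 then g i' else m); split.
  move=> [|i] [|j] //= h.
    have /andP[gm gSj] : (g j != m) && (g j \in S).
      by rewrite -in_setD1; apply: gS; lia.
    rewrite ltn_neqAle mmin // andbT.
    by apply: contra gm => /eqP/val_inj ->.
  by apply: ginc; lia.
move=> [|i] hi //=.
have /andP[//] : (g i != m) && (g i \in S).
by rewrite -in_setD1; apply: gS; lia.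
Qed.

Lemma sinks_small (hR : forall x, #|Rs x| < a - 1) (S : {set 'I_N.+1}) :
  #|[set x in S | [forall y in S, (x < y) ==> edge_color c x y]]| <= a - 1.
Proof.
set A := [set x in S | _].
case: (set_0Vmem A) => [->|[x0 x0A]]; first by rewrite cards0.
case: (@arg_minnP _ x0 (fun x => x \in A) val x0A) => m mA mmin.
have sub : A :\ m \subset Rs m.
  apply/subsetP => y; rewrite in_setD1 => /andP[ym yA].
  have le := mmin y yA.
  move: mA yA; rewrite !inE => /andP[mS /forall_inP hm] /andP[yS _].
  have lt : m < y.
    rewrite ltn_neqAle le andbT.
    by apply: contra ym => /eqP/val_inj ->.
  by rewrite lt /=; exact: (implyP (hm y yS) lt).
have := subset_leq_card sub; have := hR m; rewrite (cardsD1 m A) mA. rewrite add1n => h1 h2; exact: leq_ltn_trans h2 h1.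
Qed.

Lemma blue_path (hR : forall x, #|Rs x| < a - 1) k : forall S : {set 'I_N.+1},
  (a - 1) * k < #|S| ->
  exists p : nat -> 'I_N.+1, (forall i j, i < j <= k -> p i < p j) /\
    (forall i, i < k -> ~~ edge_color c (p i) (p i.+1)) /\
    (forall i, i <= k -> p i \in S).
Proof.
elim: k => [|k IH] S hS.
  have [x xS] : exists x, x \in S by apply/set0Pn; rewrite -card_gt0; lia.
  exists (fun _ => x); split; first by move=> i j; lia.
  by split.
pose A := [set x in S | [forall y in S, (x < y) ==> edge_color c x y]].
have hA : #|A| <= a - 1 := sinks_small hR S.
have h1 := cardsID A S.
have h2 := subset_leq_card (subsetIr S A).
have /IH [p [pinc [pblue pS]]] : (a - 1) * k < #|S :\: A|.
  rewrite mulnS in hS; lia.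
move: (pS k (leqnn k)); rewrite in_setD => /andP[nA pkS].
have : ~~ [forall y in S, (p k < y) ==> edge_color c (p k) y].
  by move: nA; rewrite inE pkS.
case/forall_inPn => y yS; rewrite negb_imply => /andP[ky kyb].
exists (fun i => if i <= k then p i else y); split; last split.
- move=> i j /andP[ij jk].
  have ik : i <= k by lia.
  rewrite ik; case: ifP => hj; first by apply: pinc; rewrite ij hj.
  apply: leq_ltn_trans ky.
  move: ik; rewrite leq_eqVlt => /orP[/eqP->|hik]; first exact: leqnn.
  by apply/ltnW/pinc; rewrite hik leqnn.
- move=> i; rewrite ltnS => hi; have [->|hik] := eqVneq i k.
    by rewrite leqnn ltnn.
  have hik' : i < k by rewrite ltn_neqAle hik hi.
  by rewrite (ltnW hik') hik'; apply: pblue.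
- move=> i hi; case: ifP => // hik.
  by have := pS i hik; rewrite in_setD => /andP[].
Qed.

End Upper.

Lemma upper a' b' N (c : coloring N.+1) : a' * b'.+1 <= N ->
  (exists phi, @incr_embedding (star_sc a'.+1) N.+1 c true phi) \/
  (exists phi, @incr_embedding (cycle_mon b'.+2) N.+1 c false phi).
Proof.
move=> hN.
case: (boolP [exists x, a' <= #|Rs c x|]).
  case/existsP => x hx; left.
  have [g [ginc gR]] := pick_incr hx.
  exists (fun i : 'I_(gorder (star_sc a'.+1)) => if val i is i'.+1 then g i' else x).
  split.
    move=> [[|u] hu] [[|v] hv]; simpl in hu, hv; move=> //= huv.
      have hv' : v < a' by lia.
      by have := gR v hv'; rewrite /Rs inE => /andP[].
    by apply: ginc; lia.
  move=> [[|u] hu] [[|v] hv]; simpl in hu, hv; move=> //=.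
    have hv' : v < a' by lia.
    by have := gR v hv'; rewrite /Rs inE => /andP[].
  move=> _; have hu' : u < a' by lia.
  have := gR u hu'; rewrite /Rs inE => /andP[xg ex].
  rewrite ec_sym // -val_eqE /=; apply/negP => /eqP e; lia.
rewrite negb_exists => /forallP hR'.
have hR : forall x, #|Rs c x| < a'.+1 - 1.
  by move=> x; rewrite subn1 /= ltnNge hR'.
set B := [set y : 'I_N.+1 | 0 < y] :\: [set y | edge_color c ord0 y].
have hB : (a'.+1 - 1) * b' < #|B|.
  have h1 := cardsID [set y | edge_color c ord0 y] [set y : 'I_N.+1 | 0 < y].
  have e1 : [set y : 'I_N.+1 | 0 < y] = [set~ ord0].
    by apply/setP => y; rewrite !inE -val_eqE /= lt0n.
  have e2 : [set y : 'I_N.+1 | 0 < y] :&: [set y | edge_color c ord0 y] = Rs c ord0.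
    by apply/setP => y; rewrite !inE.
  have e3 : #|[set y : 'I_N.+1 | 0 < y]| = N by rewrite e1 cardsC1 card_ord.
  rewrite e2 e3 in h1.
  have := hR ord0; rewrite mulnS in hN; rewrite subn1 /=. move=> h; have hB0 : #|Rs c ord0| + #|B| = N := h1. move: h hB0 hN; set r := #|Rs c ord0|; set bb := #|B|; clearbody r bb; lia.
have [p [pinc [pblue pB]]] := blue_path hR hB.
right.
exists (fun i : 'I_(gorder (cycle_mon b'.+2)) => if val i is i'.+1 then p i' else ord0).
have pB' : forall i, i <= b' -> 0 < p i /\ edge_color c ord0 (p i) = false.
  move=> i hi; have := pB i hi; rewrite !inE => /andP[/negbTE -> ->]; done.
split.
  move=> [[|u] hu] [[|v] hv]; simpl in hu, hv; move=> //= huv.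
    by case: (pB' v ltac:(lia)).
  by apply: pinc; lia.
move=> [[|u] hu] [[|v] hv]; simpl in hu, hv; rewrite /=.
- by [].
- move=> _; have hv' : v <= b' by lia.
  by case: (pB' v hv').
- move=> _; have hu' : u <= b' by lia.
  case: (pB' u hu') => h1 h2.
  by rewrite ec_sym ?h2 // -val_eqE /= -lt0n.
- case/and4P => _ _ hne /or3P [/eqP e|/eqP e|//].
  + case: e => e; subst v; apply/negbTE/pblue; lia.
  + case: e => e; subst u; rewrite ec_sym; first by apply/negbTE/pblue; lia.
    rewrite -val_eqE /=; apply/negP => /eqP hh.
    have : v < v.+1 <= b' by apply/andP; split; lia.
    by move/pinc; rewrite hh ltnn.
Qed.

Lemma lower a' b' n : n <= a' * b'.+1 ->
  ~ ord_ramsey_prop (star_sc a'.+1) (cycle_mon b'.+2) n.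
Proof.
case: a' => [|a'] hn H.
  have n0 : n = 0 by lia.
  subst n; case: (H (fun _ _ => true)) => [[phi _]|[phi _]].
    by case: (phi ord0).
  by case: (phi ord0).
pose c : coloring n := fun x y => x %/ a'.+1 == y %/ a'.+1.
have ec : forall x y, edge_color c x y = (x %/ a'.+1 == y %/ a'.+1).
  by move=> x y; rewrite /edge_color /c; case: ifP => // _; exact: eq_sym.
case: (H c) => [[phi [inc ed]]|[phi [inc ed]]]; move: phi inc ed => /= phi inc ed.
  have chain : forall i, i <= a'.+1 -> phi ord0 + i <= phi (inord i).
    elim => [|i IH] hi.
      by rewrite (_ : inord 0 = ord0) ?addn0 //; apply: val_inj; rewrite /= inordK.
    have := inc (inord i) (inord i.+1); rewrite !inordK; last 2 first.
    - lia.
    - lia.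
    move=> /(_ (ltnSn i)); have := IH ltac:(lia); lia.
  have := ed ord0 (inord a'.+1); rewrite /= inordK // ec ltnSn /= => /(_ isT) /eqP e.
  have := chain a'.+1 (leqnn _).
  move: e; set x0 := val (phi ord0); set x1 := val (phi (inord a'.+1)) => e.
  have := divn_eq x0 a'.+1; have := divn_eq x1 a'.+1; have := ltn_pmod x1 (ltn0Sn a').
  rewrite -e; set q := x0 %/ a'.+1; set r0 := x0 %% a'.+1; set r1 := x1 %% a'.+1.
  clearbody q r0 r1; lia.
have chain : forall i, i <= b'.+1 -> i <= phi (inord i) %/ a'.+1.
  elim => [|i IH] hi //.
  have lt : phi (inord i) < phi (inord i.+1).
    apply: inc; rewrite !inordK //; lia.
  have e : gedge (cycle_mon b'.+2) (inord i : 'I_b'.+2) (inord i.+1 : 'I_b'.+2).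
    rewrite /= !inordK; [|lia|lia]; rewrite eqxx /=; apply/and3P; split => //; lia.
  have := ed _ _ e; rewrite ec => /negbT ne.
  have le := leq_div2r a'.+1 (ltnW lt).
  have := IH ltac:(lia).
  move: ne le; set q0 := _ %/ a'.+1; set q1 := _ %/ a'.+1 => ne le.
  have : q0 < q1 by rewrite ltn_neqAle ne le.
  lia.
have := chain b'.+1 (leqnn _).
have : phi (inord b'.+1) < a'.+1 * b'.+1.
  by have := ltn_ord (phi (inord b'.+1)); lia.
rewrite mulnC -ltn_divLR //; lia.
Qed.

Theorem theorem4p18 (a b : nat) : (1 <= a)%N -> (2 <= b)%N ->
  is_ord_ramsey_number (star_sc a) (cycle_mon b) (1 + (a - 1) * (b - 1)).
Proof.
case: a => [|a'] // _; case: b => [|[|b']] // _.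
rewrite !subn1 /= add1n; split.
  by move=> c; apply: upper.
move=> n hn; apply: lower; lia.
Qed.
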